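(* Let $\alpha:\mathcal X\to[\alpha_{\min},\alpha_{\max}]$ with $0<\alpha_{\min}\le\alpha_{\max}<1$, and let $\mathcal A(x,m)=\{\mu\in\mathcal P(\mathcal X):\mu(y)\le m(y)/\alpha(x)\ \forall y\in\mathcal X\}$ (the dual sets of the Average Value at Risk mapping $\sigma(x,m,v)=\min_{\eta\in\mathbb R}\{\eta+\frac1{\alpha(x)}\sum_y m(y)\max(0,v(y)-\eta)\}$). Then the associated risk multikernel $\mathfrak M$ is semi-differentiable at $\mathcal I$ in every direction $K\in\mathcal T_{\mathcal Q}(\mathcal I)$, with semi-derivative \[ \mathfrak D(K)=\Big\{D\in\mathcal T_{\mathcal Q}(\mathcal I): 0\le D(y|x)\le\frac{K(y|x)}{\alpha(x)}\ \text{for all } x,y\in\mathcal X,\ y\ne x,\ \ D(\mathcal X|x)=0\ \text{for all }x\in\mathcal X\Big\}. \]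
   Context: $\mathcal X$ is a finite set, $\mathcal P(\mathcal X)$ the probability measures on $\mathcal X$, $\mathcal S$ the vector space of signed kernels $K:\mathcal X\to\mathcal M(\mathcal X)$, written $K(y|x)$, with $K(\mathcal X|x)=\sum_yK(y|x)$ and norm $\|K\|=\sup\{\sum_{y}\varphi(y)K(y|x):x\in\mathcal X,\ -1\le\varphi\le1\}$; $\mathcal Q\subset\mathcal S$ the stochastic kernels; $\mathcal I(x)=\delta_x$. $\mathrm d(K,B)=\inf_{M\in B}\|K-M\|$ ($=+\infty$ if $B=\emptyset$), and $\mathrm{dist}(\mathcal S_1,\mathcal S_2)=\max(\sup_{K\in\mathcal S_1}\mathrm d(K,\mathcal S_2),\sup_{K\in\mathcal S_2}\mathrm d(K,\mathcal S_1))$. The tangent cone is $\mathcal T_{\mathcal Q}(\mathcal I)=\{K\in\mathcal S:\lim_{\tau\downarrow0}\mathrm d(K,\frac1\tau(\mathcal Q-\mathcal I))=0\}$. The risk multikernel associated with $\mathcal A$ is $\mathfrak M(Q)=\{M\in\mathcal Q: M(x)\in\mathcal A(x,Q(x))\ \forall x\}$. $\mathfrak M$ is semi-differentiable at $\mathcal I$ in direction $K\in\mathcal T_{\mathcal Q}(\mathcal I)$ with semi-derivative $\mathfrak D(K)$ (a nonempty subset of $\mathcal S$) if for every $\varepsilon_n\downarrow0$ and every $K_n\to K$ with $K_n\in\mathcal T_{\mathcal Q}(\mathcal I)$, $\lim_{n}\mathrm{dist}\big(\frac1{\varepsilon_n}[\mathfrak M(\mathcal I+\varepsilon_nK_n)-\mathcal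 I],\mathfrak D(K)\big)=0$. *)

(* Defs.v *)
From HB Require Import structures.
From mathcomp Require Import all_boot.
From Stdlib Require Import Reals.
Set Implicit Arguments. Unset Strict Implicit. Unset Printing Implicit Defensive.
Open Scope R_scope.

Lemma Rplus_assoc' : associative Rplus.
Proof. by move=> a b c; rewrite Rplus_assoc. Qed.
HB.instance Definition _ := Monoid.isComLaw.Build R 0%R Rplus
  Rplus_assoc' Rplus_comm Rplus_0_l.

Section Kernels.
Variable X : finType.

(* A signed kernel K : X -> M(X); we write  K x y  for  K(y|x). *)
Definition kernel := X -> X -> R.

Definition kmass (K : kernel) (x : X) : R := \big[Rplus/0]_(y : X) K x y.

Definition kadd (K M : kernel) : kernel := fun x y => K x y + M x y.
Definition ksub (K M : kernel) : kernel := fun x y => K x y - M x y.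
Definition kscale (c : R) (K : kernel) : kernel := fun x y => c * K x y.

Definition kid : kernel := fun x y => if y == x then 1 else 0.

(* ||K|| <= r, where ||K|| = sup { sum_y phi(y) K(y|x) : x in X, -1 <= phi <= 1 } *)
Definition norm_le (K : kernel) (r : R) : Prop :=
  forall (x : X) (phi : X -> R), (forall y, -1 <= phi y <= 1) ->
    \big[Rplus/0]_(y : X) (phi y * K x y) <= r.

Definition is_prob (mu : X -> R) : Prop :=
  (forall y, 0 <= mu y) /\ \big[Rplus/0]_(y : X) mu y = 1.

Definition stochastic (K : kernel) : Prop := forall x, is_prob (K x).

(* Tangent cone T_Q(I): lim_{tau -> 0+} d(K, (1/tau)(Q - I)) = 0, unfolded:
   for every eps > 0 there is tau0 > 0 such that for all tau in (0,tau0)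
   some M in Q satisfies ||K - (1/tau)(M - I)|| <= eps. *)
Definition tangent_cone (K : kernel) : Prop :=
  forall eps, 0 < eps -> exists tau0, 0 < tau0 /\
    forall tau, 0 < tau < tau0 ->
      exists M, stochastic M /\
        norm_le (ksub K (kscale (/ tau) (ksub M kid))) eps.

(* Convergence lim_n dist(S1 n, S2) = 0 (Hausdorff-type distance with
   d(K,emptyset)=+oo), unfolded: for every eps > 0, eventually every element
   of each set is within norm eps of some element of the other set. *)
Definition dist_to_zero (S1 : nat -> kernel -> Prop) (S2 : kernel -> Prop) :
    Prop :=
  forall eps, 0 < eps -> exists N : nat, forall n : nat, (N <= n)%nat ->
    (forall K, S1 n K -> exists M, S2 M /\ norm_le (ksub K M) eps) /\
    (forall M, S2 M -> exists K, S1 n K /\ norm_le (ksub M K) eps).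

Definition risk_multikernel (A : X -> (X -> R) -> (X -> R) -> Prop)
    (Q : kernel) (M : kernel) : Prop :=
  stochastic M /\ forall x, A x (Q x) (M x).

Definition semi_differentiable (MM : kernel -> kernel -> Prop)
    (K : kernel) (D : kernel -> Prop) : Prop :=
  (exists D0, D D0) /\
  forall (epsn : nat -> R) (Kn : nat -> kernel),
    (forall n, 0 < epsn n) ->
    (forall n, epsn (S n) <= epsn n) ->
    (forall d, 0 < d -> exists N : nat, forall n, (N <= n)%nat -> epsn n <= d) ->
    (forall n, tangent_cone (Kn n)) ->
    (forall d, 0 < d -> exists N : nat, forall n, (N <= n)%nat ->
        norm_le (ksub (Kn n) K) d) ->
    dist_to_zero
      (fun n L => exists M, MM (kadd kid (kscale (epsn n) (Kn n))) M /\
                  L = kscale (/ epsn n) (ksub M kid))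
      D.

Definition avar_dual (alpha : X -> R) (x : X) (m : X -> R) (mu : X -> R) : Prop :=
  is_prob mu /\ forall y, mu y <= m y / alpha x.

Definition avar_semideriv (alpha : X -> R) (K : kernel) (D : kernel) : Prop :=
  tangent_cone D /\
  (forall x y, y <> x -> 0 <= D x y <= K x y / alpha x) /\
  (forall x, kmass D x = 0).

End Kernels.

(* Main.v *)
Require Import Defs.
From HB Require Import structures.
From mathcomp Require Import all_boot.
From Stdlib Require Import Reals.
Open Scope R_scope.
From HB Require Import structures.
From mathcomp Require Import all_boot.
From mathcomp Require Import zify.
From Stdlib Require Import Reals Lra Lia FunctionalExtensionality.
Open Scope R_scope.
Set Implicit Arguments.

Lemma sum_le (I : finType) (P : pred I) (f g : I -> R) :
  (forall i, P i -> f i <= g i) ->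
  \big[Rplus/0]_(i | P i) f i <= \big[Rplus/0]_(i | P i) g i.
Proof.
move=> h; apply: (big_ind2 (fun a b => a <= b)) => //; first lra.
move=> *; lra.
Qed.

Lemma sum_ge0 (I : finType) (P : pred I) (f : I -> R) :
  (forall i, P i -> 0 <= f i) -> 0 <= \big[Rplus/0]_(i | P i) f i.
Proof.
move=> h; apply: (big_ind (fun a => 0 <= a)) => //; first lra.
move=> *; lra.
Qed.

Lemma sum_abs (I : finType) (P : pred I) (f : I -> R) :
  Rabs (\big[Rplus/0]_(i | P i) f i) <= \big[Rplus/0]_(i | P i) Rabs (f i).
Proof.
apply: (big_ind2 (fun a b => Rabs a <= b)) => //; first by rewrite Rabs_R0; lra.
- move=> a b c d h1 h2; have := Rabs_triang a c; lra.
- move=> i _; lra.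
Qed.

Lemma sum_scale (I : finType) (P : pred I) (c : R) (f : I -> R) :
  \big[Rplus/0]_(i | P i) (c * f i) = c * \big[Rplus/0]_(i | P i) f i.
Proof.
apply: (big_ind2 (fun a b => a = c * b)) => //; first ring.
by move=> a b d e -> ->; ring.
Qed.

Lemma sum_add (I : finType) (P : pred I) (f g : I -> R) :
  \big[Rplus/0]_(i | P i) (f i + g i) =
  \big[Rplus/0]_(i | P i) f i + \big[Rplus/0]_(i | P i) g i.
Proof. exact: big_split. Qed.

Lemma sum_sub (I : finType) (P : pred I) (f g : I -> R) :
  \big[Rplus/0]_(i | P i) (f i - g i) =
  \big[Rplus/0]_(i | P i) f i - \big[Rplus/0]_(i | P i) g i.
Proof.
rewrite (eq_bigr (fun i => f i + (-1) * g i)); last by move=> i _; ring.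
rewrite sum_add sum_scale; ring.
Qed.

Lemma entry_le_sum (I : finType) (f : I -> R) (j : I) :
  (forall i, 0 <= f i) -> f j <= \big[Rplus/0]_(i : I) f i.
Proof.
move=> h; rewrite (bigD1 j) //=.
have := @sum_ge0 I (fun i => (i != j)) f (fun i _ => h i); lra.
Qed.

Lemma sum_filter_le (I : finType) (P : pred I) (f : I -> R) :
  (forall i, 0 <= f i) -> \big[Rplus/0]_(i | P i) f i <= \big[Rplus/0]_(i : I) f i.
Proof.
move=> h; rewrite big_mkcond /=; apply: sum_le => i _.
case: (P i); [lra | exact: h].
Qed.

Lemma sum_split (I : finType) (f : I -> R) (j : I) :
  \big[Rplus/0]_(i : I) f i = f j + \big[Rplus/0]_(i | i != j) f i.
Proof. by rewrite (bigD1 j). Qed.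

Lemma sum_kid (X : finType) (x : X) : \big[Rplus/0]_(y : X) kid x y = 1.
Proof.
rewrite (@sum_split _ _ x) /kid eqxx big1; first lra.
by move=> y /negbTE ->.
Qed.

Lemma abs_small (a : R) : (forall e, 0 < e -> Rabs a <= e) -> a = 0.
Proof.
move=> h; case: (Req_dec a 0) => // hne.
have hp := Rabs_pos_lt a hne.
have := h (Rabs a / 2) ltac:(lra); lra.
Qed.

Lemma phi_abs (p k : R) : -1 <= p <= 1 -> p * k <= Rabs k.
Proof.
move=> hp; case: (Rcase_abs k) => hk.
- rewrite Rabs_left //; nra.
- rewrite Rabs_pos_eq; nra.
Qed.

Lemma norm_row (X : finType) (K : kernel X) r x :
  norm_le K r -> \big[Rplus/0]_(y : X) Rabs (K x y) <= r.
Proof.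
move=> h.
pose phi := fun y => if Rle_dec 0 (K x y) then 1 else -1.
have -> : \big[Rplus/0]_(y : X) Rabs (K x y) = \big[Rplus/0]_(y : X) (phi y * K x y).
  apply: eq_bigr => y _; rewrite /phi; case: Rle_dec => hy /=.
  + rewrite Rabs_pos_eq; [ring|exact hy].
  + rewrite Rabs_left; [ring|lra].
apply: h => y; rewrite /phi; case: Rle_dec => _ /=; lra.
Qed.

Lemma norm_of_rows (X : finType) (K : kernel X) r :
  (forall x, \big[Rplus/0]_(y : X) Rabs (K x y) <= r) -> norm_le K r.
Proof.
move=> h x phi hphi; apply: Rle_trans (h x).
apply: sum_le => y _; exact: phi_abs.
Qed.

Lemma entry_abs (X : finType) (K : kernel X) r x y :
  norm_le K r -> Rabs (K x y) <= r.
Proof.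
move=> h; apply: Rle_trans (norm_row x h).
apply: (@entry_le_sum _ (fun y => Rabs (K x y))) => i; exact: Rabs_pos.
Qed.

Lemma kid_off (X : finType) (x y : X) : y != x -> kid x y = 0.
Proof. by rewrite /kid => /negbTE ->. Qed.
Lemma kid_diag (X : finType) (x : X) : kid x x = 1.
Proof. by rewrite /kid eqxx. Qed.

Lemma tc_offdiag (X : finType) (K : kernel X) x y :
  tangent_cone K -> y != x -> 0 <= K x y.
Proof.
move=> hK hyx; case: (Rle_lt_dec 0 (K x y)) => // hneg.
have [t0 [ht0 hT]] := hK (- K x y / 2) ltac:(lra).
have [M [hM hn]] := hT (t0 / 2) ltac:(lra).
have := entry_abs x y hn; rewrite /ksub /kscale kid_off // Rminus_0_r.
have hMp : 0 <= M x y by case: (hM x) => h _; exact: h.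
have hi : 0 < / (t0 / 2) by apply: Rinv_0_lt_compat; lra.
have hp : 0 <= / (t0 / 2) * M x y by apply: Rmult_le_pos; lra.
move=> ha; have := Rle_abs (- (K x y - / (t0 / 2) * M x y)).
rewrite Rabs_Ropp; lra.
Qed.

Lemma tc_mass (X : finType) (K : kernel X) x :
  tangent_cone K -> kmass K x = 0.
Proof.
move=> hK; apply: abs_small => e he.
have [t0 [ht0 hT]] := hK e he.
have [M [hM hn]] := hT (t0 / 2) ltac:(lra).
apply: Rle_trans _ (norm_row x hn).
set F := ksub _ _.
have -> : kmass K x = \big[Rplus/0]_(y : X) F x y.
  rewrite /F /ksub /kscale sum_sub sum_scale sum_sub sum_kid.
  case: (hM x) => _ ->; rewrite /kmass; ring.
exact: sum_abs.
Qed.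

Lemma tc_intro (X : finType) (L : kernel X) :
  (forall x y, y != x -> 0 <= L x y) -> (forall x, kmass L x = 0) ->
  tangent_cone L.
Proof.
move=> hoff hmass e he.
pose B := 1 + \big[Rplus/0]_(x : X) \big[Rplus/0]_(y : X) Rabs (L x y).
have hB : forall x y, Rabs (L x y) <= B - 1.
  move=> x y; rewrite /B.
  apply: Rle_trans (@entry_le_sum _ (fun y => Rabs (L x y)) y _) _.
    by move=> i; exact: Rabs_pos.
  have := @entry_le_sum _ (fun x => \big[Rplus/0]_(y : X) Rabs (L x y)) x.
  move=> h; have := h (fun i => sum_ge0 _ _ _ (fun j _ => Rabs_pos (L i j))); lra.
have hB1 : 1 <= B.
  have := sum_ge0 _ xpredT _ (fun x _ => sum_ge0 _ xpredT _ (fun j _ => Rabs_pos (L x j))).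
  rewrite /B; lra.
exists (/ B); split; first by apply: Rinv_0_lt_compat; lra.
move=> tau [ht1 ht2].
have htB : tau * B < 1.
  have := Rmult_lt_compat_r B _ _ ltac:(lra) ht2.
  by rewrite Rinv_l; lra.
exists (kadd (kid (X:=X)) (kscale tau L)); split.
- move=> x; split.
  + move=> y; rewrite /kadd /kscale; case: (eqVneq y x) => [->|hyx].
    * rewrite kid_diag; have := hB x x; have := Rle_abs (- L x x).
      rewrite Rabs_Ropp; nra.
    * rewrite kid_off //; have := hoff x y hyx; nra.
  + rewrite /kadd /kscale sum_add sum_scale sum_kid.
    by have := hmass x; rewrite /kmass => ->; ring.
- apply: norm_of_rows => x.
  rewrite (eq_bigr (fun _ => 0)); last first.
    move=> y _; rewrite /ksub /kadd /kscale.
    have -> : / tau * (kid x y + tau * L x y - kid x y) = L x y.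
      by field; lra.
    by rewrite Rminus_diag Rabs_R0.
  by rewrite big1 //; lra.
Qed.

Definition fix_diag (X : finType) (f : kernel X) : kernel X :=
  fun x y => if y == x then - \big[Rplus/0]_(z | z != x) f x z else f x y.

Lemma fix_diag_mass (X : finType) (f : kernel X) x : kmass (fix_diag f) x = 0.
Proof.
rewrite /kmass (@sum_split _ _ x) /fix_diag eqxx.
rewrite [X in _ + X = _](eq_bigr (fun z => f x z)); first ring.
by move=> y /negbTE ->.
Qed.

Lemma fix_diag_off (X : finType) (f : kernel X) x y :
  y != x -> fix_diag f x y = f x y.
Proof. by rewrite /fix_diag => /negbTE ->. Qed.

Lemma row_close (X : finType) (x : X) (L D e : X -> R) :
  \big[Rplus/0]_(y : X) L y = 0 -> \big[Rplus/0]_(y : X) D y = 0 ->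
  (forall y, y != x -> Rabs (L y - D y) <= e y) -> (forall y, 0 <= e y) ->
  \big[Rplus/0]_(y : X) Rabs (L y - D y) <= 2 * \big[Rplus/0]_(y : X) e y.
Proof.
move=> hL hD hle he.
rewrite (@sum_split _ _ x) in hL; rewrite (@sum_split _ _ x) in hD.
rewrite (@sum_split _ _ x).
have h1 : \big[Rplus/0]_(y | y != x) Rabs (L y - D y) <= \big[Rplus/0]_(y | y != x) e y.
  exact: sum_le.
have h2 := sum_filter_le _ (fun y => y != x) _ he.
have h3 := sum_abs _ (fun y => y != x) (fun y => L y - D y).
rewrite sum_sub in h3.
have -> : L x - D x = - (\big[Rplus/0]_(y | y != x) L y - \big[Rplus/0]_(y | y != x) D y) by lra.
rewrite Rabs_Ropp; lra.
Qed.

Lemma clamp_err (amin a l kn k : R) :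
  0 < amin -> amin <= a -> 0 <= l -> l <= kn / a ->
  Rabs (l - Rmin l (k / a)) <= Rabs (kn - k) * / amin.
Proof.
move=> h0 h1 h2 h3.
have hp : 0 <= Rabs (kn - k) * / amin.
  apply: Rmult_le_pos; [exact: Rabs_pos | left; apply: Rinv_0_lt_compat; lra].
case: (Rle_dec l (k / a)) => hl.
- by rewrite Rmin_left // Rminus_diag Rabs_R0.
- rewrite Rmin_right; last lra.
  rewrite Rabs_pos_eq; last lra.
  have e1 : kn / a - k / a = (kn - k) * / a by rewrite /Rdiv; ring.
  have hia : 0 <= / a by left; apply: Rinv_0_lt_compat; lra.
  have e2 : (kn - k) * / a <= Rabs (kn - k) * / a.
    apply: Rmult_le_compat_r => //; exact: Rle_abs.
  have e3 : Rabs (kn - k) * / a <= Rabs (kn - k) * / amin.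
    apply: Rmult_le_compat_l; first exact: Rabs_pos.
    exact: Rinv_le_contravar.
  lra.
Qed.

Lemma total_bound (X : finType) (K : kernel X) x y :
  Rabs (K x y) <= \big[Rplus/0]_(x : X) \big[Rplus/0]_(y : X) Rabs (K x y).
Proof.
apply: Rle_trans (@entry_le_sum _ (fun y => Rabs (K x y)) y _) _.
  by move=> i; exact: Rabs_pos.
apply: (@entry_le_sum _ (fun x => \big[Rplus/0]_(y : X) Rabs (K x y)) x).
move=> i; exact: (sum_ge0 _ _ _ (fun j _ => Rabs_pos (K i j))).
Qed.

Lemma le_div (a t u : R) : 0 < a -> u * a <= t -> u <= t / a.
Proof.
move=> ha h; apply: (Rmult_le_reg_r a) => //.
rewrite /Rdiv Rmult_assoc Rinv_l; lra.
Qed.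

Unset Implicit Arguments.
Theorem theorem7p6 (X : finType) (alpha : X -> R) (amin amax : R) :
  0 < amin -> amin <= amax -> amax < 1 ->
  (forall x, amin <= alpha x <= amax) ->
  forall K : kernel X, tangent_cone K ->
    semi_differentiable (risk_multikernel (avar_dual alpha)) K
      (avar_semideriv alpha K).
Proof.
move=> ha0 hmm hmax hal K hK.
have hKoff : forall x y, y != x -> 0 <= K x y by move=> x y; exact: tc_offdiag.
have halp : forall x, 0 < alpha x by move=> x; have := hal x; lra.
have hdivnn : forall t x, 0 <= t -> 0 <= t / alpha x.
  move=> t x ht; apply: Rmult_le_pos => //; left; exact: Rinv_0_lt_compat.
split.
  exists (fun _ _ => 0); split; [|split].
  - apply: tc_intro => [x y _|x]; first lra.
    by rewrite /kmass big1.
  - move=> x y /eqP hyx; split; first lra.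
    by apply: hdivnn; apply: hKoff.
  - by move=> x; rewrite /kmass big1.
move=> epsn Kn hpos _ hlim htc hconv e he.
pose c := Rmin amin (1 - amax).
have hc : 0 < c by apply: Rmin_glb_lt; lra.
have hc1 : c <= amin := Rmin_l _ _.
have hc2 : c <= 1 - amax := Rmin_r _ _.
pose B := 1 + \big[Rplus/0]_(x : X) \big[Rplus/0]_(y : X) Rabs (K x y).
have hKB : forall x y, Rabs (K x y) <= B - 1.
  move=> x y; have := total_bound K x y; rewrite /B; lra.
have hB1 : 1 <= B.
  have := sum_ge0 _ xpredT _ (fun x _ => sum_ge0 _ xpredT _ (fun j _ => Rabs_pos (K x j))).
  rewrite /B; lra.
have [N1 hN1] := hconv 1 Rlt_0_1.
have [N2 hN2] := hconv (e * amin / 2) ltac:(nra).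
have [N3 hN3] := hlim (c / B) ltac:(apply: Rdiv_lt_0_compat; lra).
exists (N1 + N2 + N3)%nat => n hn.
have hn1 := hN1 n ltac:(lia).
have hn2 := hN2 n ltac:(lia).
have hn3 := hN3 n ltac:(lia).
set en := epsn n in hn3 *.
have hen : 0 < en := hpos n.
have henB : en * B <= c.
  have := Rmult_le_compat_r B _ _ ltac:(lra) hn3.
  by rewrite /Rdiv Rmult_assoc Rinv_l; lra.
have hKnoff : forall x y, y != x -> 0 <= Kn n x y by move=> x y; exact: tc_offdiag.
have hKnmass : forall x, kmass (Kn n) x = 0 by move=> x; exact: tc_mass.
have hKnB : forall x, Rabs (Kn n x x) <= B.
  move=> x; have h1 := entry_abs x x hn1; rewrite /ksub in h1.
  have := Rabs_triang (Kn n x x - K x x) (K x x).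
  have -> : Kn n x x - K x x + K x x = Kn n x x by ring.
  have := hKB x x; lra.
pose err := fun x y => / amin * Rabs (Kn n x y - K x y).
have hia : 0 < / amin by exact: Rinv_0_lt_compat.
have herr0 : forall x y, 0 <= err x y.
  move=> x y; apply: Rmult_le_pos; [lra | exact: Rabs_pos].
have herrsum : forall x, 2 * \big[Rplus/0]_(y : X) err x y <= e.
  move=> x; rewrite /err sum_scale.
  have := norm_row x hn2; rewrite /ksub => h.
  have := Rmult_le_compat_l (/ amin) _ _ ltac:(lra) h.
  have -> : / amin * (e * amin / 2) = e / 2 by field; lra.
  lra.
split.
- move=> Lk [M [[hMst hMA] ->]].
  set L := kscale (/ en) (ksub M (@kid X)).
  have hLoff : forall x y, y != x -> 0 <= L x y <= Kn n x y / alpha x.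
    move=> x y hyx; have [_ hb] := hMA x; have hb' := hb y.
    rewrite /kadd /kscale kid_off // Rplus_0_l in hb'.
    have hm : 0 <= M x y by case: (hMst x) => h _; exact: h.
    have hie : 0 < / en by exact: Rinv_0_lt_compat.
    rewrite /L /kscale /ksub kid_off // Rminus_0_r; split.
      by apply: Rmult_le_pos; lra.
    have := Rmult_le_compat_l (/ en) _ _ ltac:(lra) hb'.
    have -> : / en * (en * Kn n x y / alpha x) = Kn n x y / alpha x.
      by field; split; [have := halp x|]; lra.
    done.
  have hLmass : forall x, \big[Rplus/0]_(y : X) L x y = 0.
    move=> x; rewrite /L /kscale /ksub sum_scale sum_sub sum_kid.
    by case: (hMst x) => _ ->; ring.
  set D := fix_diag (fun x y => Rmin (L x y) (K x y / alpha x)).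
  exists D; split.
    split; [|split].
    + apply: tc_intro.
      * move=> x y hyx; rewrite /D fix_diag_off //; apply: Rmin_glb.
        - exact: (hLoff x y hyx).1.
        - by apply: hdivnn; apply: hKoff.
      * by move=> x; apply: fix_diag_mass.
    + move=> x y /eqP hyx; rewrite /D fix_diag_off //; split.
      * apply: Rmin_glb; [exact: (hLoff x y hyx).1 | by apply: hdivnn; apply: hKoff].
      * exact: Rmin_r.
    + by move=> x; apply: fix_diag_mass.
  apply: norm_of_rows => x; rewrite /ksub.
  apply: Rle_trans (herrsum x).
  apply: (row_close x (L x) (D x) (err x)).
  + exact: hLmass.
  + exact: (fix_diag_mass _ x).
  + move=> y hyx; rewrite /D fix_diag_off //.
    have [h1 h2] := hLoff x y hyx.
    rewrite /err Rmult_comm; exact: (clamp_err (K x y) ha0 (hal x).1 h1 h2).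
  + exact: herr0.
- move=> Dk [hDtc [hDoff hDmass]].
  set L := fix_diag (fun x y => Rmin (Dk x y) (Kn n x y / alpha x)).
  have hLoff : forall x y, y != x -> 0 <= L x y <= Kn n x y / alpha x.
    move=> x y hyx; rewrite /L fix_diag_off //; split.
    * apply: Rmin_glb; first by have := hDoff x y (elimN eqP hyx); lra.
      by apply: hdivnn; apply: hKnoff.
    * exact: Rmin_r.
  have hLxx : forall x, L x x = - \big[Rplus/0]_(z | z != x) L x z.
    move=> x; rewrite {1}/L /fix_diag eqxx; congr (- _).
    by apply: eq_bigr => z hz; rewrite /L fix_diag_off.
  have hLdle : forall x, L x x <= 0.
    move=> x; rewrite hLxx.
    have := sum_ge0 _ (fun z => z != x) (L x) (fun z hz => (hLoff x z hz).1); lra.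
  have hLdge : forall x, Kn n x x <= L x x * alpha x.
    move=> x.
    have hs : \big[Rplus/0]_(z | z != x) L x z <= / alpha x * \big[Rplus/0]_(z | z != x) Kn n x z.
      rewrite -sum_scale; apply: sum_le => z hz.
      have := (hLoff x z hz).2; rewrite /Rdiv Rmult_comm; lra.
    have hm := hKnmass x; rewrite /kmass (@sum_split _ _ x) in hm.
    have hax := halp x.
    have hia2 : 0 < / alpha x by exact: Rinv_0_lt_compat.
    rewrite hLxx.
    have e1 : \big[Rplus/0]_(z | z != x) Kn n x z = - Kn n x x by lra.
    rewrite e1 in hs.
    have := Rmult_le_compat_r (alpha x) _ _ ltac:(lra) hs.
    have -> : / alpha x * - Kn n x x * alpha x = - Kn n x x by field; lra.
    nra.
  exists L; split.
    pose M := kadd (@kid X) (kscale en L).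
    have hMst : stochastic M.
      move=> x; split.
      + move=> y; rewrite /M /kadd /kscale; case: (eqVneq y x) => [->|hyx].
        * rewrite kid_diag.
          have h1 := hLdge x; have h2 := hLdle x; have h3 := hKnB x.
          have h4 := Rle_abs (- Kn n x x); rewrite Rabs_Ropp in h4.
          have hax := halp x; have hal1 := (hal x).1.
          have h5 : en * Kn n x x <= en * (L x x * alpha x) by apply: Rmult_le_compat_l; lra.
          have h6 : en * (- Kn n x x) <= en * B by apply: Rmult_le_compat_l; lra.
          have h7 : 0 <= alpha x * (1 + en * L x x) by nra.
          nra.
        * rewrite kid_off // Rplus_0_l; have := (hLoff x y hyx).1; nra.
      + rewrite /M /kadd /kscale sum_add sum_scale sum_kid.
        have := fix_diag_mass (fun x y => Rmin (Dk x y) (Kn n x y / alpha x)) x.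
        by rewrite /kmass -/L => ->; ring.
    exists M; split.
      split; first exact: hMst.
      move=> x; split; first exact: hMst.
      move=> y; rewrite /M /kadd /kscale; case: (eqVneq y x) => [->|hyx].
      * rewrite !kid_diag.
        have h2 := hLdle x; have h3 := hKnB x.
        have h4 := Rle_abs (- Kn n x x); rewrite Rabs_Ropp in h4.
        have hax := halp x; have hal2 := (hal x).2.
        have h6 : en * (- Kn n x x) <= en * B by apply: Rmult_le_compat_l; lra.
        have h5 : en * L x x <= 0 by nra.
        apply: Rle_trans (_ : 1 <= _); first lra.
        apply: le_div => //; lra.
      * rewrite !kid_off // !Rplus_0_l.
        have := Rmult_le_compat_l en _ _ ltac:(lra) (hLoff x y hyx).2.
        by rewrite /Rdiv Rmult_assoc.
    apply: functional_extensionality => x; apply: functional_extensionality => y.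
    rewrite /M /kscale /ksub /kadd; field; lra.
  apply: norm_of_rows => x; rewrite /ksub.
  apply: Rle_trans (herrsum x).
  apply: (row_close x (Dk x) (L x) (err x)).
  + exact: hDmass.
  + exact: (fix_diag_mass _ x).
  + move=> y hyx; rewrite /L fix_diag_off //.
    have [h1 h2] := hDoff x y (elimN eqP hyx).
    rewrite /err Rmult_comm (Rabs_minus_sym (Kn n x y)).
    exact: (clamp_err (Kn n x y) ha0 (hal x).1 h1 h2).
  + exact: herr0.
Qed.
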